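(* Let $X$ be a path-connected topological space admitting a universal cover, $\mathbb A$ an abelian group, $\mathfrak a\in H^1(X;\mathbb A)$, $\alpha$ a singular one-cocycle representing $\mathfrak a$ and $x\in X$. Then: (1) $\mathfrak G_{x,\alpha}$ is a two-cocycle on $\mathrm{Homeo}(X,\mathfrak a)$, i.e. for all $g,h,k\in\mathrm{Homeo}(X,\mathfrak a)$, $$\mathfrak G_{x,\alpha}(h,k)-\mathfrak G_{x,\alpha}(gh,k)+\mathfrak G_{x,\alpha}(g,hk)-\mathfrak G_{x,\alpha}(g,h)=0;$$ (2) the value $\mathfrak G_{x,\alpha}(g,h)$ does not depend on the choice of the path from $x$ to $hx$; (3) the cohomology class of $\mathfrak G_{x,\alpha}$ depends neither on the reference point $x$ nor on the cocycle $\alpha$ representing $\mathfrak a$; (4) if either $g^*\alpha=\alpha$ or $hx=x$, then $\mathfrak G_{x,\alpha}(g,h)=0$.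
   Context: $\mathrm{Homeo}(X,\mathfrak a)$ is the group of homeomorphisms $g$ of $X$ with $g^*\mathfrak a=\mathfrak a$. $\mathfrak G_{x,\alpha}(g,h):=\int_\gamma g^*\alpha-\alpha$, where $\gamma$ is a path from $x$ to $hx$ and $\int_\gamma\sigma$ denotes the natural pairing of the chain $\gamma$ with the cochain $\sigma$. The cohomology class in (3) is in the group cohomology of $\mathrm{Homeo}(X,\mathfrak a)$ as a discrete group with trivial coefficients $\mathbb A$. *)

(* Defs.v *)
From HB Require Import structures.
From mathcomp Require Import all_boot all_order all_algebra.
From mathcomp Require Import all_classical all_reals all_analysis.
From mathcomp Require Import ring lra subtype_topology.
Import numFieldNormedType.Exports.
Set Implicit Arguments. Unset Strict Implicit. Unset Printing Implicit Defensive.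
Import Order.TTheory GRing.Theory Num.Theory.
Local Open Scope classical_set_scope.
Local Open Scope ring_scope.

Section Simplices.
Variable R : realType.

Definition std1 : set R := [set t | 0 <= t <= 1].
Definition std2 : set (R * R) := [set p | 0 <= p.1 /\ 0 <= p.2 /\ p.1 + p.2 <= 1].

Local Notation simplex1 := (set_type std1).
Local Notation simplex2 := (set_type std2).

Lemma std1_0 : (0 : R) \in std1.
Proof. by apply/mem_set; rewrite /std1 /= lexx ler01. Qed.
Lemma std1_1 : (1 : R) \in std1.
Proof. by apply/mem_set; rewrite /std1 /= lexx ler01. Qed.

Definition vtx0 : simplex1 := SigSub std1_0.
Definition vtx1 : simplex1 := SigSub std1_1.

Lemma face0P (t : simplex1) : (1 - val t, val t) \in std2.
Proof.
case: t => t /set_mem /= /andP[t0 t1]; apply/mem_set; rewrite /std2 /=.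
split; [|split]; lra.
Qed.
Lemma face1P (t : simplex1) : (0, val t) \in std2.
Proof.
case: t => t /set_mem /= /andP[t0 t1]; apply/mem_set; rewrite /std2 /=.
split; [|split]; lra.
Qed.
Lemma face2P (t : simplex1) : (val t, 0) \in std2.
Proof.
case: t => t /set_mem /= /andP[t0 t1]; apply/mem_set; rewrite /std2 /=.
split; [|split]; lra.
Qed.

(** Face maps of the 2-simplex with vertices v0=(0,0), v1=(1,0), v2=(0,1):
    face i is the affine order-preserving map onto the face opposite v_i. *)
Definition face0 (t : simplex1) : simplex2 := SigSub (face0P t).
Definition face1 (t : simplex1) : simplex2 := SigSub (face1P t).
Definition face2 (t : simplex1) : simplex2 := SigSub (face2P t).
End Simplices.

Notation simplex1 R := (set_type (@std1 R)).
Notation simplex2 R := (set_type (@std2 R)).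

Section Cochains.
Variables (R : realType) (X : topologicalType) (A : zmodType).

(** A singular 1-cochain with coefficients in A is a function on singular
    1-simplices; only its values on continuous maps simplex1 -> X matter,
    and all conditions below quantify over continuous simplices only. *)
Definition cochain1 := (simplex1 R -> X) -> A.

Definition path_from_to (x y : X) (gam : simplex1 R -> X) :=
  continuous gam /\ gam (vtx0 R) = x /\ gam (vtx1 R) = y.

Definition path_connected := forall x y : X, exists gam, path_from_to x y gam.

Definition cocycle1 (alpha : cochain1) :=
  forall sigma : simplex2 R -> X, continuous sigma ->
    alpha (sigma \o face0 (R:=R)) - alpha (sigma \o face1 (R:=R))
      + alpha (sigma \o face2 (R:=R)) = 0.

Definition cohomologous1 (alpha beta : cochain1) :=
  exists f : X -> A, forall gam : simplex1 R -> X, continuous gam ->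
    alpha gam - beta gam = f (gam (vtx1 R)) - f (gam (vtx0 R)).

Definition cochain_eq (alpha beta : cochain1) :=
  forall gam : simplex1 R -> X, continuous gam -> alpha gam = beta gam.

Definition pullback (g : X -> X) (alpha : cochain1) : cochain1 :=
  fun gam => alpha (g \o gam).

Definition is_homeo (g : X -> X) :=
  continuous g /\ exists ginv : X -> X,
    continuous ginv /\ cancel g ginv /\ cancel ginv g.

Definition in_Homeo (alpha : cochain1) (g : X -> X) :=
  is_homeo g /\ cohomologous1 (pullback g alpha) alpha.

(** G_{x,alpha}(g,h) := \int_gam (g^*alpha - alpha), gam some path from x to hx
    (a path is chosen; 0 if there is none). *)
Definition Gcoc (x : X) (alpha : cochain1) (g h : X -> X) : A :=
  xget 0 [set a : A | exists gam, path_from_to x (h x) gam /\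
                                  a = pullback g alpha gam - alpha gam].
End Cochains.

Section Cover.
Variable R : realType.

Definition covering_map (Y X : topologicalType) (p : Y -> X) :=
  continuous p /\ (forall x, exists y, p y = x) /\
  forall x : X, exists U : set X, open U /\ U x /\
    exists F : set (set Y),
      (forall V, F V -> open V) /\
      (forall V W, F V -> F W -> V `&` W !=set0 -> V = W) /\
      p @^-1` U = \bigcup_(V in F) V /\
      (forall V, F V -> p @` V = U /\ {in V &, injective p} /\
         exists s : X -> Y, {within U, continuous s} /\
           forall u, U u -> V (s u) /\ p (s u) = u).

Definition simply_connected (Y : topologicalType) :=
  path_connected R Y /\
  forall gam : simplex1 R -> Y, continuous gam -> gam (vtx0 R) = gam (vtx1 R) ->
    exists H : (simplex1 R * simplex1 R)%type -> Y, continuous H /\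
      (forall t, H (t, vtx0 R) = gam t) /\
      (forall t, H (t, vtx1 R) = gam (vtx0 R)) /\
      (forall s, H (vtx0 R, s) = gam (vtx0 R)) /\
      (forall s, H (vtx1 R, s) = gam (vtx0 R)).

Definition has_universal_cover (X : topologicalType) :=
  exists (Y : topologicalType) (p : Y -> X), covering_map p /\ simply_connected Y.
End Cover.

(* Main.v *)
Require Import Defs.
From HB Require Import structures.
From mathcomp Require Import all_boot all_order all_algebra.
From mathcomp Require Import all_classical all_reals all_analysis.
From mathcomp Require Import subtype_topology.
Import Order.TTheory GRing.Theory Num.Theory.
Import numFieldNormedType.Exports.
Local Open Scope classical_set_scope.
Local Open Scope ring_scope.

Lemma Zb (A : zmodType) (eg1 eg0 fg1 fg0 b e1 e0 : A) :
 eg1 - eg0 + (fg1 - fg0 + b) - (e1 - e0 + b) = fg1 + eg1 - e1 - (fg0 + eg0 - e0).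
Proof. apply/eqP; rewrite -subr_eq0 ?opprD ?opprK ?addrA; apply/eqP.
by rewrite (ACl ((1*10)*(13*2)*(3*9)*(12*4)*(5*8)*(11*6)*(7*14))) /= !subrr !addr0. Qed.
Lemma Zp1 (A : zmodType) (P p Q q r : A) : P - p - (Q + P - (q + p)) + (Q - r) - (q - r) = 0.
Proof. rewrite ?opprD ?opprK ?addrA.
by rewrite (ACl ((1*4)*(6*2)*(7*3)*(5*9)*(10*8))) /= !subrr !addr0. Qed.

Lemma Z3 (A : zmodType) (a b c d u v w z H D : A) :
  a - b - (c + d - u - (v + w - z)) =
  u - z - (H - D) - (d - z - (a - c + H - D)) + (w - z - (b - v + D - D)).
Proof. apply/eqP; rewrite -subr_eq0 ?opprD ?opprK ?addrA; apply/eqP.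
by rewrite (ACl ((1*15)*(21*2)*(16*3)*(13*4)*(5*9)*(6*22)*(7*19)*(10*8)*(20*14)*(11*17)*(18*12)*(23*24))) /= !subrr !addr0. Qed.

Section H.
Variables (R : realType) (X : topologicalType) (A : zmodType).
Implicit Types (alpha : cochain1 R X A).

Lemma contc (Y Z : topologicalType) (f : X -> Z) (g : Y -> X) :
  continuous f -> continuous g -> continuous (f \o g).
Proof. by move=> cf cg t; apply: continuous_comp; [exact: cg|exact: cf]. Qed.

Lemma GcocE x alpha g h (c : A) : (exists gam, path_from_to (R:=R) x (h x) gam) ->
  (forall gam, path_from_to (R:=R) x (h x) gam -> pullback g alpha gam - alpha gam = c) ->
  Gcoc x alpha g h = c.
Proof.
move=> [gam pg] H; rewrite /Gcoc.
have := xgetPex 0 (ex_intro _ c (ex_intro _ gam (conj pg (esym (H _ pg))))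
   : exists a, [set a : A | exists gam, path_from_to (R:=R) x (h x) gam /\
                                  a = pullback g alpha gam - alpha gam] a).
by move=> [g2 [p2 ->]]; exact: H.
Qed.

Lemma homeo_prim alpha g : in_Homeo alpha g -> exists f : X -> A,
  forall gam, continuous gam -> alpha (g \o gam) - alpha gam = f (gam (vtx1 R)) - f (gam (vtx0 R)).
Proof. by move=> [_ [f Hf]]; exists f. Qed.

Lemma Gprim x alpha g h (f : X -> A) : path_connected R X ->
  (forall gam, continuous gam -> alpha (g \o gam) - alpha gam = f (gam (vtx1 R)) - f (gam (vtx0 R))) ->
  Gcoc x alpha g h = f (h x) - f x.
Proof.
move=> pc Hf; apply: GcocE; first exact: pc.
by move=> gam [c [e0 e1]]; rewrite /pullback Hf // e0 e1.
Qed.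

Lemma primcomp alpha g h (fg fh : X -> A) : continuous h ->
  (forall gam, continuous gam -> alpha (g \o gam) - alpha gam = fg (gam (vtx1 R)) - fg (gam (vtx0 R))) ->
  (forall gam, continuous gam -> alpha (h \o gam) - alpha gam = fh (gam (vtx1 R)) - fh (gam (vtx0 R))) ->
  (forall gam, continuous gam -> alpha ((g \o h) \o gam) - alpha gam =
     (fun z => fg (h z) + fh z) (gam (vtx1 R)) - (fun z => fg (h z) + fh z) (gam (vtx0 R))).
Proof.
move=> ch Hg Hh gam cg /=.
have := Hg (h \o gam) ((@contc _ _ h gam ch cg)); have := Hh gam cg => /= E1 E2.
rewrite -[alpha ((g \o h) \o gam)](subrK (alpha (h \o gam))) -addrA E1.
change ((g \o h) \o gam) with (g \o (h \o gam)); by rewrite E2 opprD addrACA.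
Qed.


Lemma primbeta alpha beta g (fg e : X -> A) : continuous g ->
  (forall gam, continuous gam -> alpha (g \o gam) - alpha gam = fg (gam (vtx1 R)) - fg (gam (vtx0 R))) ->
  (forall gam, continuous gam -> beta gam - alpha gam = e (gam (vtx1 R)) - e (gam (vtx0 R))) ->
  (forall gam, continuous gam -> beta (g \o gam) - beta gam =
     (fun z => fg z + e (g z) - e z) (gam (vtx1 R)) - (fun z => fg z + e (g z) - e z) (gam (vtx0 R))).
Proof.
move=> cg Hg He gam cgam /=.
have E1 := He _ (@contc _ _ g gam cg cgam); have E2 := He _ cgam; have E3 := Hg _ cgam.
move: E1 E2 E3 => /=.
set a1 := beta _; set a2 := beta gam; set b1 := alpha _; set b2 := alpha gam.
move=> /eqP; rewrite subr_eq => /eqP ->.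
move=> /eqP; rewrite subr_eq => /eqP ->.
move=> /eqP; rewrite subr_eq => /eqP ->.
exact: Zb.
Qed.
End H.
Arguments homeo_prim {R X A alpha g}.
Arguments primcomp {R X A alpha g h fg fh}.
Arguments primbeta {R X A alpha beta g fg e}.
Arguments Gprim {R X A} x alpha g h {f}.
Arguments GcocE {R X A} x alpha g h c.
Arguments contc {X Y Z f g}.

Theorem lemma2p1 (R : realType) (X : topologicalType) (A : zmodType)
    (alpha : cochain1 R X A) (x : X) :
  path_connected R X -> has_universal_cover R X -> cocycle1 alpha ->
  (* (1) cocycle identity on Homeo(X, [alpha]) *)
  (forall g h k : X -> X,
     in_Homeo alpha g -> in_Homeo alpha h -> in_Homeo alpha k ->
     Gcoc x alpha h k - Gcoc x alpha (g \o h) k + Gcoc x alpha g (h \o k)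
       - Gcoc x alpha g h = 0) /\
  (* (2) independence of the path *)
  (forall g h : X -> X, in_Homeo alpha g -> in_Homeo alpha h ->
     forall gam, path_from_to x (h x) gam ->
       Gcoc x alpha g h = pullback g alpha gam - alpha gam) /\
  (* (3) the group-cohomology class is independent of x and of the representative *)
  (forall (y : X) (beta : cochain1 R X A), cocycle1 beta -> cohomologous1 beta alpha ->
     exists phi : (X -> X) -> A, forall g h : X -> X,
       in_Homeo alpha g -> in_Homeo alpha h ->
       Gcoc x alpha g h - Gcoc y beta g h = phi h - phi (g \o h) + phi g) /\
  (* (4) vanishing *)
  (forall g h : X -> X, in_Homeo alpha g -> in_Homeo alpha h ->
     cochain_eq (pullback g alpha) alpha \/ h x = x -> Gcoc x alpha g h = 0).
Proof.
move=> pc _ _; split; last split; last split.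
- move=> g h k Hg Hh Hk.
  case: (homeo_prim Hg) => fg Efg; case: (homeo_prim Hh) => fh Efh.
  have ch : continuous h := Hh.1.1.
  rewrite (Gprim x alpha h k pc Efh).
  rewrite (Gprim x alpha (g \o h) k pc (primcomp ch Efg Efh)).
  rewrite (Gprim x alpha g (h \o k) pc Efg).
  rewrite (Gprim x alpha g h pc Efg) /=.
  exact: Zp1.
- move=> g h Hg Hh gam pg.
  case: (homeo_prim Hg) => fg Efg.
  rewrite (Gprim x alpha g h pc Efg).
  by case: pg => c [e0 e1]; rewrite /pullback Efg // e0 e1.
- move=> y beta _ [e He].
  case: (pc y x) => del [cdel [d0 d1]].
  exists (fun k => e (k y) - e y - (alpha (k \o del) - alpha del)).
  move=> g h Hg Hh.
  case: (homeo_prim Hg) => fg Efg.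
  have cg : continuous g := Hg.1.1.
  have ch : continuous h := Hh.1.1.
  rewrite (Gprim x alpha g h pc Efg).
  rewrite (Gprim y beta g h pc (primbeta cg Efg He)) /=.
  have E1 := Efg _ (contc ch cdel); have E2 := Efg _ cdel.
  rewrite /= d0 d1 in E1 E2.
  change ((g \o h) \o del) with (g \o (h \o del)).
  move: E1 => /eqP; rewrite subr_eq => /eqP ->.
  move: E2 => /eqP; rewrite subr_eq => /eqP ->.
  exact: Z3.
- move=> g h Hg Hh [Heq|Hx].
    apply: GcocE; first exact: pc.
    by move=> gam [c _]; rewrite Heq // subrr.
  case: (homeo_prim Hg) => fg Efg.
  by rewrite (Gprim x alpha g h pc Efg) Hx subrr.
Qed.
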